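(* Let $M=(Q,\mathcal{A},\Delta,I,F)$ be a complete symbolic finite automaton. Let $n=|Q|$, $m=|\Delta|$, $k$ the size of the largest predicate used in $\Delta$, $m_q$ the number of transitions of $\Delta$ leaving $q$ for each $q\in Q$, and $\hat m=\max\{m_q\mid q\in Q\}$. Then the algorithm NoCountSim described in the context computes $\preceq_M$ in time $$O\Big(n\sum_{q\in Q}m_q^2 + m^2\,\mathcal{C}_{sat}(\hat m,k)\Big).$$
   Context: An effective Boolean algebra is $\mathcal{A}=(\mathfrak{D},\mathbb{P},[\![\cdot]\!],\vee,\wedge,\neg)$ where $\mathbb{P}$ is a set of predicates closed under $\vee,\wedge,\neg$, with an interpretation $[\![\cdot]\!]:\mathbb{P}\to 2^{\mathfrak{D}}$ mapping $\vee,\wedge,\neg$ to union, intersection and complement w.r.t. $\mathfrak{D}$; $\mathit{IsSat}(\varphi)$ means $[\![\varphi]\!]\neq\emptyset$, and the operations and $\mathit{IsSat}$ are computable. Predicates have a measurable size; $\mathcal{C}_{sat}(x,y)$ denotes the worst-case complexity of constructing a predicate obtained by applying $x$ operations of $\mathcal{A}$ to predicates of size at most $y$ and checking its satisfiability. An SFA is $M=(Q,\mathcal{A},\Delta,I,F)$ with finite state set $Q$, finite transition relation $\Delta\subseteq Q\times\mathbb{P}\times Q$ whose predicates are satisfiable, initial states $I$, final states $F$; its concrete transitions are $[\![\Delta]\!]=\{(q,a,p)\mid (q,\psi,p)\in\Delta, a\in[\![\psi]\!]\}$. $M$ is complete if for every $q\in Q$ and $a\in\mathfrak{D}$ there is $p$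 with $(q,a,p)\in[\![\Delta]\!]$. A relation $S\subseteq Q\times Q$ is a simulation on $M$ if whenever $(p,r)\in S$: $p\in F$ implies $r\in F$, and for all $a\in\mathfrak{D}$ and $(p,a,p')\in[\![\Delta]\!]$ there is $(r,a,r')\in[\![\Delta]\!]$ with $(p',r')\in S$; $\preceq_M$ is the unique maximal simulation. For a binary relation $R$ and element $x$, $R(x)=\{y\mid(x,y)\in R\}$. For $q\in Q$ and $J\subseteq Q$, $\Gamma(q,J)=\bigvee_{j\in J}\bigvee_{(q,\psi,j)\in\Delta}\psi$ (the disjunction of the predicates of all transitions from $q$ into $J$), and $q\to J$ means there is a transition of $\Delta$ from $q$ to some state of $J$. Algorithm NoCountSim (input: a complete SFA $M$): 1. Set $\mathit{Sim}:=Q\times Q$ and $\mathit{NotSim}:=F\times(Q\setminus F)$. 2. While there is $i\in Q$ with $\mathit{NotSim}(i)\neq\emptyset$: choose such $i$; set $\mathit{Rm}:=\{t\mid t\to\mathit{NotSim}(i)\}$; remove from $\mathit{Sim}$ all pairs $(i,j)$ with $j\in\mathit{NotSim}(i)$; remove from $\mathit{NotSim}$ all pairs with first component $i$; then for each $t\in\mathit{Rm}$: set $\psi:=\Gamma(t,\mathit{Sim}(i))$, and for every transition $(s,\varphi_{si},i)\in\Delta$ with $(s,t)\in\mathit{Sim}$, if $\mathit{IsSat}(\neg\psi\wedge\varphi_{si})$ then add $(s,t)$ to $\mathit{NotSim}$. 3. Return $\mathit{Sim}$. *)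

(* Defs.v *)
From mathcomp Require Import all_boot.
Set Implicit Arguments. Unset Strict Implicit. Unset Printing Implicit Defensive.

(* Computability of the operations and of IsSat is implicit: they are Rocq
   functions.  [psize] is the measurable size of a predicate. *)
Record EBA := {
  eba_dom : Type;
  eba_pred : Type;
  eba_sem : eba_pred -> eba_dom -> Prop;
  eba_or : eba_pred -> eba_pred -> eba_pred;
  eba_and : eba_pred -> eba_pred -> eba_pred;
  eba_neg : eba_pred -> eba_pred;
  eba_size : eba_pred -> nat;
  eba_isSat : eba_pred -> bool;
  eba_sem_or : forall p q a, eba_sem (eba_or p q) a <-> (eba_sem p a \/ eba_sem q a);
  eba_sem_and : forall p q a, eba_sem (eba_and p q) a <-> (eba_sem p a /\ eba_sem q a);
  eba_sem_neg : forall p a, eba_sem (eba_neg p) a <-> ~ eba_sem p a;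
  eba_isSatP : forall p, eba_isSat p = true <-> exists a, eba_sem p a
}.

Record SFA (A : EBA) := {
  sfa_st : finType;
  sfa_tr : finType;
  sfa_src : sfa_tr -> sfa_st;
  sfa_lab : sfa_tr -> eba_pred A;
  sfa_dst : sfa_tr -> sfa_st;
  sfa_init : {set sfa_st};
  sfa_fin : {set sfa_st};
  sfa_lab_sat : forall e, eba_isSat (sfa_lab e) = true
}.

Section SFADefs.
Variables (A : EBA) (M : SFA A).
Local Notation Q := (sfa_st M).
Local Notation E := (sfa_tr M).
Local Notation src := (@sfa_src A M).
Local Notation dst := (@sfa_dst A M).
Local Notation lab := (@sfa_lab A M).

Definition ctrans (q : Q) (a : eba_dom A) (p : Q) : Prop :=
  exists e : E, [/\ src e = q, dst e = p & eba_sem (lab e) a].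

Definition complete : Prop := forall (q : Q) (a : eba_dom A), exists p, ctrans q a p.

Definition is_simulation (S : {set Q * Q}) : Prop :=
  forall p r, (p, r) \in S ->
    (p \in sfa_fin M -> r \in sfa_fin M) /\
    (forall a p', ctrans p a p' -> exists r', ctrans r a r' /\ (p', r') \in S).

Definition is_max_simulation (S : {set Q * Q}) : Prop :=
  is_simulation S /\ forall S', is_simulation S' -> S' \subset S.

Definition img (R : {set Q * Q}) (x : Q) : {set Q} := [set y | (x, y) \in R].

Definition outdeg (q : Q) : nat := #|[set e : E | src e == q]|.
Definition indeg (q : Q) : nat := #|[set e : E | dst e == q]|.
Definition mhat : nat := \max_(q : Q) outdeg q.
Definition kmax : nat := \max_(e : E) eba_size (lab e).

(* Gamma(t, J): the disjunction of the guards of the transitions from t into J.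
   [None] stands for the empty disjunction (bottom). *)
Definition gamma_list (t : Q) (J : {set Q}) : seq (eba_pred A) :=
  [seq lab e | e <- enum E & (src e == t) && (dst e \in J)].
Definition gamma (t : Q) (J : {set Q}) : option (eba_pred A) :=
  if gamma_list t J is p :: ps then Some (foldl (@eba_or A) p ps) else None.
(* IsSat(~psi /\ phi) (with ~bottom /\ phi taken to be phi) *)
Definition check (psi : option (eba_pred A)) (phi : eba_pred A) : bool :=
  if psi is Some p then eba_isSat (eba_and (eba_neg p) phi) else eba_isSat phi.
(* number of Boolean-algebra operations used to build the predicate checked:
   (d-1) disjunctions, one negation, one conjunction for d >= 1 disjuncts *)
Definition gamma_ops (t : Q) (J : {set Q}) : nat :=
  if size (gamma_list t J) is d.+1 then d.+2 else 0.

Definition state := ({set Q * Q} * {set Q * Q})%type.   (* (Sim, NotSim) *)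

Definition init_state : state :=
  ([set: Q * Q], setX (sfa_fin M) (~: sfa_fin M)).

Definition enabled (s : state) (i : Q) : bool := img s.2 i != set0.
Definition halted (s : state) : bool := [forall i, ~~ enabled s i].

Section Body.
Variables (s : state) (i : Q).
Definition NI : {set Q} := img s.2 i.
Definition Rm : {set Q} := [set t | [exists e : E, (src e == t) && (dst e \in NI)]].
Definition Sim1 : {set Q * Q} := s.1 :\: [set (i, j) | j in NI].
Definition NotSim1 : {set Q * Q} := [set x in s.2 | x.1 != i].
Definition added : {set Q * Q} :=
  [set x | [exists t, exists e : E,
     [&& t \in Rm, dst e == i, x == (src e, t), x \in Sim1 &
         check (gamma t (img Sim1 i)) (lab e)]]].
Definition step : state := (Sim1, NotSim1 :|: added).

(* Cost model for one iteration: unit cost for choosing i,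
   for each removed pair, for each predecessor scan when computing Rm, for
   each transition scanned when computing psi, for each transition (s,phi,i)
   examined, plus Csat(#ops, k) for each satisfiability check performed. *)
Definition step_cost (Csat : nat -> nat -> nat) : nat :=
  1 + #|NI| + \sum_(j in NI) indeg j +
  \sum_(t in Rm) (outdeg t +
     \sum_(e : E | dst e == i)
        (1 + (if (src e, t) \in Sim1
              then Csat (gamma_ops t (img Sim1 i)) kmax else 0))).
End Body.

Inductive run (Csat : nat -> nat -> nat) : state -> nat -> state -> Prop :=
| run_stop s : halted s -> run Csat s 0 s
| run_step s i c s' : enabled s i -> run Csat (step s i) c s' ->
    run Csat s (step_cost s i Csat + c) s'.

Definition ncs_next (s' s : state) : Prop := exists i, enabled s i /\ s' = step s i.

End SFADefs.

(* Main.v *)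
Require Import Defs.
From mathcomp Require Import all_boot.
From mathcomp Require Import zify.
From Stdlib Require Import Classical.
Set Implicit Arguments. Unset Strict Implicit. Unset Printing Implicit Defensive.

Section Proofs.
Variables (A : EBA) (M : SFA A).
Local Notation Q := (sfa_st M).
Local Notation E := (sfa_tr M).
Local Notation src := (@sfa_src A M).
Local Notation dst := (@sfa_dst A M).
Local Notation lab := (@sfa_lab A M).
Local Notation sem := (@eba_sem A).

Lemma foldl_orP (acc : eba_pred A) (l : seq E) a :
  sem (foldl (@eba_or A) acc (map lab l)) a <-> sem acc a \/ exists2 e, e \in l & sem (lab e) a.
Proof.
elim: l acc => [|e l IH] acc /=.
  split; [by left | by case=> // [[e]]; rewrite in_nil].
rewrite IH eba_sem_or. split.
- case=> [[H|H]|[e' He' H]]; [by left | right; exists e => //; by rewrite inE eqxx | right; exists e' => //; by rewrite inE He' orbT].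
- case=> [H|[e' He' H]]; [by left; left|].
  move: He'; rewrite inE => /orP [/eqP Ee|He']; [by left; right; rewrite -Ee | by right; exists e'].
Qed.

Lemma gammaP t J a :
  (exists g, gamma t J = Some g /\ sem g a) <->
  exists e, [/\ src e = t, dst e \in J & sem (lab e) a].
Proof.
rewrite /gamma /gamma_list.
have memP : forall e, (e \in [seq e <- enum E | (src e == t) && (dst e \in J)]) = (src e == t) && (dst e \in J).
  by move=> e; rewrite mem_filter mem_enum andbT.
case Hl: [seq e <- enum E | (src e == t) && (dst e \in J)] memP => [|e0 l] memP /=.
  split; first by case=> g [].
  case=> e [He1 He2 _]; have := memP e; rewrite in_nil He1 eqxx He2 //.
have H := foldl_orP (lab e0) l a.
split.
- case=> g [[<-]] /H [Hs|[e He Hs]].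
  + have := memP e0; rewrite inE eqxx /= => /esym/andP[/eqP ? ?]; by exists e0.
  + have := memP e; rewrite inE He orbT => /esym/andP[/eqP ? ?]; by exists e.
- case=> e [He1 He2 Hs]; eexists; split; first reflexivity.
  apply/H. have := memP e; rewrite He1 eqxx He2 inE => /orP[/eqP Ee|Hel].
  + by left; rewrite -Ee.
  + by right; exists e.
Qed.

Lemma check_false t J e0 a :
  check (gamma t J) (lab e0) = false -> sem (lab e0) a ->
  exists e, [/\ src e = t, dst e \in J & sem (lab e) a].
Proof.
rewrite /check; case Hg: (gamma t J) => [g|] Hc Ha.
- apply/gammaP; exists g; split => //.
  apply: NNPP => Hn.
  have : eba_isSat (eba_and (eba_neg g) (lab e0)) = true.
    by apply/eba_isSatP; exists a; apply/eba_sem_and; split => //; apply/eba_sem_neg.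
  by rewrite Hc.
- by move: (sfa_lab_sat e0); rewrite Hc.
Qed.

Lemma check_true t J e0 :
  check (gamma t J) (lab e0) = true ->
  exists a, sem (lab e0) a /\ ~ exists e, [/\ src e = t, dst e \in J & sem (lab e) a].
Proof.
rewrite /check; case Hg: (gamma t J) => [g|] /eba_isSatP [a Ha].
- move/eba_sem_and: Ha => [/eba_sem_neg Hn Ha]; exists a; split => //.
  move/gammaP => [g' [Hg' Hs]]; move: Hg'; rewrite Hg => -[Eg]; by apply: Hn; rewrite Eg.
- exists a; split => //; move/gammaP => [g' [Hg' _]]; by rewrite Hg in Hg'.
Qed.

Definition Inv (s : state M) := s.2 \subset s.1.

Lemma step_inv s i : Inv s -> Inv (step s i).
Proof.
move=> H; apply/subsetP => x; rewrite /step /= inE => /orP[|].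
- rewrite /NotSim1 inE => /andP[Hx Hi]; rewrite /Sim1 inE (subsetP H _ Hx) andbT.
  apply/imsetP => -[j _ Ex]; by move: Hi; rewrite Ex eqxx.
- by rewrite /added inE => /existsP[t /existsP[e /and5P[_ _ /eqP -> ? _]]].
Qed.

Lemma D_sub s i : Inv s -> [set (i, j) | j in NI s i] \subset s.1.
Proof.
move=> H; apply/subsetP => x /imsetP[j Hj ->]; apply: (subsetP H).
by move: Hj; rewrite /NI /img inE.
Qed.

Lemma step_card s i : Inv s -> enabled s i -> #|(step s i).1| < #|s.1|.
Proof.
move=> H En; rewrite /step /= /Sim1.
move: En; rewrite /enabled => /set0Pn[j Hj].
have Hin : (i, j) \in s.1 by apply: (subsetP (D_sub i H)); apply/imsetP; exists j.
apply: (leq_trans _ (proper_card (properD1 Hin))); apply: subset_leq_card.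
apply/subsetP => x; rewrite !inE => /andP[Hx ->]; rewrite andbT.
apply/negP => /eqP Ex; move: Hx; rewrite Ex imset_f //.
Qed.

Lemma acc_ind n : forall s : state M, #|s.1| < n -> Inv s -> Acc (@ncs_next A M) s.
Proof.
elim: n => [//|n IH] s Hn Hs; constructor => s' [i [En ->]].
apply: IH; last exact: step_inv.
have := step_card Hs En; lia.
Qed.

Definition Sound (s : state M) := forall S', is_simulation S' ->
  forall x, x \in S' -> x \in s.1 /\ x \notin s.2.

Definition Compl (s : state M) := forall p r, (p, r) \in s.1 -> (p, r) \notin s.2 ->
  (p \in sfa_fin M -> r \in sfa_fin M) /\
  (forall a p', ctrans p a p' -> exists r', ctrans r a r' /\ (p', r') \in s.1).

Lemma step_sound s i : Inv s -> Sound s -> Sound (step s i).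
Proof.
move=> Hi Hs S' HS'.
have H1 : forall x, x \in S' -> x \in Sim1 s i.
  move=> x Hx; have [Hx1 Hx2] := Hs S' HS' x Hx; rewrite /Sim1 inE Hx1 andbT.
  apply/imsetP => -[j Hj Ex]; move: Hx2; rewrite Ex.
  by move: Hj; rewrite /NI /img inE => ->.
move=> x Hx; split; first exact: H1.
rewrite /step /= inE negb_or; apply/andP; split.
  rewrite /NotSim1 inE negb_and; by have [_ ->] := Hs S' HS' x Hx.
rewrite /added inE; apply/negP => /existsP[t /existsP[e /and5P[_ /eqP Hd /eqP Ex _ Hc]]].
have [a [Ha Hn]] := check_true Hc.
subst x; have [_ Hsim] := HS' _ _ Hx.
have [r' [[e' [Hs' Hd' Ha']] Hr']] := Hsim a i (ex_intro _ e (And3 erefl Hd Ha)).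
apply: Hn; exists e'; split => //.
by rewrite /img inE Hd'; apply: H1.
Qed.

Lemma step_compl s i : Inv s -> Compl s -> Compl (step s i).
Proof.
move=> Hi Hc p r; rewrite /step /= => HS1 HN.
have Hold : (p, r) \notin s.2.
  move: HN; rewrite inE negb_or => /andP[HN _].
  case: (eqVneq p i) => [Epi|Hpi].
  - subst p; move: HS1; rewrite /Sim1 inE => /andP[HD _]; apply/negP => Hin.
    by move: HD; rewrite imset_f // /NI /img inE.
  - by move: HN; rewrite /NotSim1 inE Hpi andbT.
have HS : (p, r) \in s.1 by move: HS1; rewrite /Sim1 inE => /andP[].
have [HF Htr] := Hc p r HS Hold; split => // a p' Hp.
have [r' [Hr' Hpr']] := Htr a p' Hp.
case HD: ((p', r') \in [set (i, j) | j in NI s i]); last first.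
  by exists r'; split => //; rewrite /Sim1 inE HD Hpr'.
move/imsetP: HD => [j Hj [Ep' Er']]; subst p' j.
move: HN; rewrite inE negb_or => /andP[_ HNa].
case: Hp => e [Hse Hde Hae].
case Hck: (check (gamma r (img (Sim1 s i) i)) (lab e)); last first.
  have [e'' [Hs'' Hd'' Ha'']] := check_false Hck Hae.
  exists (dst e''); split; first by exists e''.
  by move: Hd''; rewrite /img inE.
exfalso; move/negP: HNa; apply; rewrite /added inE; apply/existsP; exists r.
apply/existsP; exists e; rewrite Hde eqxx Hse eqxx HS1 Hck /= andbT.
case: Hr' => e' [Hs' Hd' _]; rewrite /Rm inE; apply/existsP; exists e'.
by rewrite Hs' eqxx Hd'.
Qed.

Lemma halted_nil (s : state M) : halted s -> s.2 = set0.
Proof.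
move=> /forallP H; apply/setP => -[x y]; rewrite inE; apply/negP => Hxy.
have := H x; rewrite /enabled negbK => /eqP E0.
by have := in_set0 y; rewrite -E0 /img inE Hxy.
Qed.


Lemma sum_part (T I : finType) (p : T -> I) (P : pred T) (g : T -> nat) :
  \sum_(i : I) \sum_(x | P x && (p x == i)) g x = \sum_(x | P x) g x.
Proof. by rewrite (partition_big p predT). Qed.

Lemma size_filter_card (T : finType) (P : pred T) : size [seq x <- enum T | P x] = #|[set x | P x]|.
Proof. rewrite size_filter cardE /enum_mem size_filter count_filter; apply: eq_count => x; by rewrite !inE andbT. Qed.

Lemma indegE j : indeg j = \sum_(e | dst e == j) 1.
Proof. rewrite /indeg -sum1_card; apply: eq_bigl => e; by rewrite inE. Qed.

Lemma outdegE j : outdeg j = \sum_(e | src e == j) 1.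
Proof. rewrite /outdeg -sum1_card; apply: eq_bigl => e; by rewrite inE. Qed.

Lemma sum_Rm_le (f : Q -> nat) (N : {set Q}) :
  \sum_(t in [set t | [exists e : E, (src e == t) && (dst e \in N)]]) f t <=
  \sum_(j in N) \sum_(e | dst e == j) f (src e).
Proof.
set R := [set t | _].
have ->: \sum_(j in N) \sum_(e | dst e == j) f (src e) = \sum_(e | dst e \in N) f (src e).
  rewrite (partition_big dst (mem N)) //=; apply: eq_bigr => j Hj; apply: eq_bigl => e.
  by case: (eqVneq (dst e) j) => [->|]; rewrite ?Hj ?andbF.
rewrite -(sum_part src (fun e => dst e \in N) (fun e => f (src e))).
rewrite [X in _ <= X](bigID (mem R)) /=; apply: leq_trans (leq_addr _ _).
apply: leq_sum => t; rewrite inE => /existsP[e0 /andP[/eqP Hs Hd]].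
rewrite (bigD1 e0) /=; first by rewrite Hs leq_addr.
by rewrite Hd Hs eqxx.
Qed.

Lemma card_Rm_le (N : {set Q}) :
  #|[set t | [exists e : E, (src e == t) && (dst e \in N)]]| <= \sum_(j in N) indeg j.
Proof.
rewrite -sum1_card; apply: leq_trans (sum_Rm_le (fun _ => 1) N) _.
by rewrite leq_eqVlt; apply/orP; left; apply/eqP; apply: eq_bigr => j _; rewrite indegE.
Qed.

Lemma gamma_ops_le t (J N : {set Q}) :
  [exists e : E, (src e == t) && (dst e \in N)] -> (forall j, j \in N -> j \notin J) ->
  gamma_ops t J <= outdeg t.
Proof.
move=> /existsP[e0 /andP[Hs Hd]] HNJ.
have Hlt : size (gamma_list t J) < outdeg t.
  rewrite /gamma_list size_map size_filter_card /outdeg; apply: proper_card.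
  apply/properP; split.
    by apply/subsetP => e; rewrite !inE => /andP[].
  exists e0; first by rewrite inE.
  by rewrite inE Hs /= (negbTE (HNJ _ Hd)).
rewrite /gamma_ops; move: Hlt; case: (size (gamma_list t J)) => //.
Qed.

Lemma sumT_const (T : finType) c : \sum_(x : T) c = #|T| * c.
Proof. by rewrite sum_nat_const. Qed.

Section Cost.
Variable Csat : nat -> nat -> nat.
Hypothesis Hmono : forall x x' y y', x <= x' -> y <= y' -> Csat x y <= Csat x' y'.
Definition KK := Csat (mhat M) (kmax M).
Definition w (x : Q * Q) := 2 + indeg x.2 + \sum_(e | dst e == x.2) outdeg (src e)
   + indeg x.2 * (indeg x.1 * (1 + KK)).
Definition Phi (S : {set Q * Q}) := \sum_(x in S) w x.

Lemma step_cost_le s i : Inv s -> enabled s i ->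
  step_cost s i Csat + Phi (step s i).1 <= Phi s.1.
Proof.
move=> Hi En.
have HD := D_sub i Hi.
have ->: Phi s.1 = Phi (step s i).1 + \sum_(j in NI s i) w (i, j).
  rewrite /Phi (big_setID [set (i, j) | j in NI s i]) /= addnC; congr (_ + _).
  rewrite (setIidPr HD) big_imset //; by move=> x y _ _ [].
rewrite addnC leq_add2l /step_cost.
set N := NI s i.
have H1 : \sum_(t in Rm s i) (outdeg t + \sum_(e | dst e == i)
        (1 + (if (src e, t) \in Sim1 s i
              then Csat (gamma_ops t (img (Sim1 s i) i)) (kmax M) else 0)))
   <= \sum_(t in Rm s i) outdeg t + #|Rm s i| * (indeg i * (1 + KK)).
  rewrite big_split /= -sum_nat_const leq_add2l; apply: leq_sum => t Ht.
  rewrite indegE big_distrl /=; apply: leq_sum => e _; rewrite mul1n leq_add2l.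
  case: ifP => _ //; apply: Hmono => //.
  apply: leq_trans (leq_bigmax t).
  apply: (@gamma_ops_le t _ N); first by move: Ht; rewrite /Rm inE.
  move=> j Hj; rewrite /img inE /Sim1 inE negb_and negbK; apply/orP; left.
  by apply/imsetP; exists j.
have H2 := sum_Rm_le (@outdeg A M) N.
have H3 := card_Rm_le N.
have H4 : 0 < #|N| by rewrite card_gt0.
have Hw : \sum_(j in N) w (i, j) = 2 * #|N| + \sum_(j in N) indeg j
     + \sum_(j in N) \sum_(e | dst e == j) outdeg (src e)
     + (\sum_(j in N) indeg j) * (indeg i * (1 + KK)).
  by rewrite /w /= !big_split /= sum_nat_const big_distrl /= mulnC.
have H5 : #|Rm s i| * (indeg i * (1 + KK)) <= (\sum_(j in N) indeg j) * (indeg i * (1 + KK)).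
  by rewrite leq_mul2r H3 orbT.
rewrite Hw. move: H1 H2 H5; rewrite /Rm -/N. lia.
Qed.


Lemma run_ok s c sf : run Csat s c sf -> Inv s -> Sound s -> Compl s ->
  is_max_simulation sf.1 /\ c + Phi sf.1 <= Phi s.1.
Proof.
elim=> {s c sf} [s Hh|s i c s' En _ IH] Hi Hs Hc.
- split; last by rewrite add0n.
  have E0 := halted_nil Hh; split.
  + move=> p r Hpr; have := Hc p r Hpr; rewrite E0 in_set0 => /(_ isT) //.
  + move=> S' HS'; apply/subsetP => x Hx; by have [] := Hs S' HS' x Hx.
- have [Hm Hle] := IH (step_inv i Hi) (step_sound i Hi Hs) (@step_compl s i Hi Hc).
  split => //; have := step_cost_le Hi En; lia.
Qed.

Lemma sum_indeg : \sum_(j : Q) indeg j = #|E|.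
Proof.
rewrite -sum1_card (partition_big dst predT) //=; apply: eq_bigr => j _.
by rewrite indegE.
Qed.

Lemma sum_outdeg : \sum_(j : Q) outdeg j = #|E|.
Proof.
rewrite -sum1_card (partition_big src predT) //=; apply: eq_bigr => j _.
by rewrite outdegE.
Qed.

Lemma sum_outdeg_src : \sum_(e : E) outdeg (src e) = \sum_(q : Q) outdeg q ^ 2.
Proof.
rewrite (partition_big src predT) //=; apply: eq_bigr => q _.
rewrite (eq_bigr (fun _ => outdeg q)); last by move=> e /= /eqP ->.
rewrite expnS expn1 {3}outdegE big_distrr /=; apply: eq_bigr => e _; by rewrite muln1.
Qed.


Lemma Phi_T : Phi [set: Q * Q] =
  #|Q| * (2 * #|Q| + #|E| + \sum_(q : Q) outdeg q ^ 2) + #|E| * (#|E| * (1 + KK)).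
Proof.
rewrite /Phi (eq_bigl predT); last by move=> x; rewrite inE.
rewrite -(pair_big predT predT (fun i j => w (i, j))) /=.
rewrite (eq_bigr (fun i : Q => (2 * #|Q| + #|E| + \sum_(q : Q) outdeg q ^ 2) + #|E| * (indeg i * (1 + KK)))).
  by rewrite big_split /= sumT_const -big_distrr /= -big_distrl /= sum_indeg.
move=> i _; rewrite /w /= !big_split /= sumT_const sum_indeg -big_distrl /= sum_indeg.
rewrite -sum_outdeg_src -(sum_part dst predT (fun e => outdeg (src e))) /=.
by rewrite mulnC.
Qed.

End Cost.

Lemma two_mul_le (u v : nat) : 2 * (u * v) <= u ^ 2 + v ^ 2.
Proof.
case: (leqP v u) => H; [rewrite -(subnK H) | rewrite -(subnK (ltnW H))]; move: (_ - _) => d; nia.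
Qed.

Lemma CS (T : finType) (a : T -> nat) :
  (\sum_(x : T) a x) ^ 2 <= #|T| * \sum_(x : T) a x ^ 2.
Proof.
have E1 : (\sum_(x : T) a x) ^ 2 = \sum_(x : T) \sum_(y : T) a x * a y.
  rewrite expnS expn1 big_distrl /=; apply: eq_bigr => x _; by rewrite big_distrr.
have E2 : \sum_(x : T) \sum_(y : T) (a x ^ 2 + a y ^ 2) = 2 * (#|T| * \sum_(x : T) a x ^ 2).
  rewrite (eq_bigr (fun x => #|T| * a x ^ 2 + \sum_(y : T) a y ^ 2)); last first.
    by move=> x _; rewrite big_split /= sumT_const.
  rewrite big_split /= sumT_const -big_distrr /=; lia.
have L : 2 * (\sum_(x : T) \sum_(y : T) a x * a y) <= \sum_(x : T) \sum_(y : T) (a x ^ 2 + a y ^ 2).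
  rewrite big_distrr /=; apply: leq_sum => x _; rewrite big_distrr /=.
  apply: leq_sum => y _; exact: two_mul_le.
lia.
Qed.

End Proofs.

Theorem lemma5 :
  exists C : nat,
  forall (A : EBA) (Csat : nat -> nat -> nat),
    (forall x x' y y', x <= x' -> y <= y' -> Csat x y <= Csat x' y') ->
  forall M : SFA A,
    inhabited (eba_dom A) ->
    complete M ->
    (* every run of NoCountSim terminates *)
    Acc (@ncs_next A M) (init_state M) /\
    (* and every terminated run returns preceq_M, within the time bound *)
    forall (c : nat) (sf : state M),
      run Csat (init_state M) c sf ->
      is_max_simulation sf.1 /\
      #|sfa_st M| ^ 2 + c <=
        C * (#|sfa_st M| * (\sum_(q : sfa_st M) outdeg q ^ 2)
             + #|sfa_tr M| ^ 2 * Csat (mhat M) (kmax M)).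
Proof.
exists 6 => A Csat Hmono M [a0] Hcomp.
have Hinit : Inv (init_state M) by apply: subsetT.
split.
  by apply: (@acc_ind A M (#|(init_state M).1|.+1)).
move=> c sf Hrun.
have Hs : Sound (init_state M).
  move=> S' HS' [p r] Hx; split; first by rewrite inE.
  rewrite /init_state /= !inE; apply/negP => /andP[Hp].
  have [HF _] := HS' p r Hx; by rewrite HF.
have Hc : Compl (init_state M).
  move=> p r _; rewrite /init_state /= !inE negb_and negbK => Hpr; split.
    by move=> Hp; rewrite Hp /= in Hpr.
  move=> a p' _; have [r' Hr'] := Hcomp r a; exists r'; split => //; by rewrite inE.
have [Hmax Hle] := run_ok Hmono Hrun Hinit Hs Hc.
split => //.
rewrite Phi_T /KK in Hle.
set n := #|sfa_st M| in Hle *.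
set m := #|sfa_tr M| in Hle *.
set S2 := \sum_(q : sfa_st M) outdeg q ^ 2 in Hle *.
set K := Csat (mhat M) (kmax M) in Hle *.
have Hout : forall q : sfa_st M, 0 < outdeg q.
  move=> q; have [p [e [Hse _ _]]] := Hcomp q a0.
  rewrite /outdeg card_gt0; apply/set0Pn; exists e; by rewrite inE Hse.
have h0 : n <= S2.
  rewrite /n -[#|_|]muln1 -sumT_const; apply: leq_sum => q _; by rewrite expn_gt0 Hout.
have hm : m <= S2.
  rewrite /m -sum_outdeg; apply: leq_sum => q _; have := Hout q; move: (outdeg q) => k; nia.
have h3 : m ^ 2 <= n * S2 by rewrite /m -sum_outdeg; apply: CS.
have h1 : n * n <= n * S2 by rewrite leq_mul2l h0 orbT.
have h2 : n * m <= n * S2 by rewrite leq_mul2l hm orbT.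
move: Hle h1 h2 h3; clearbody n m S2 K; nia.
Qed.
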